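(* Let $C$ be a Reedy category, let $\Gamma$ be one of $\int N(C)$, $\int N^{-,+}(C)$, $\int N^{--,+}_+(C)$, and let $(\alpha,\theta),(\alpha',\theta')\colon([m],X)\to([n],Y)$ be parallel morphisms in $\Gamma$. The following are equivalent: (1) $(\alpha,\theta)$ and $(\alpha',\theta')$ are equivalent; (2) $(\alpha,\theta)$ and $(\alpha',\theta')$ have a common upper bound in $\mathrm{Hom}_\Gamma(([m],X),([n],Y))$; (3) the largest element of $\{\psi:(\alpha,\theta)\le\psi\}$ coincides with the largest element of $\{\psi:(\alpha',\theta')\le\psi\}$ (these largest elements exist).
   Context: A Reedy category $(C,C_-,C_+)$: wide subcategories with unique factorization of every morphism as ($C_-$ then $C_+$), membership in $C_\pm$ decidable, and the relation ($x<'y$ iff non-identity $x\to y$ in $C_+$ or non-identity $y\to x$ in $C_-$) well-founded. $\Delta$: finite ordinals $[n]$ and order-preserving maps. $\int N(C)$: objects $([n],X)$ with $X\colon[n]\to C$ a functor; morphisms $([m],X)\to([n],Y)$ are $(\alpha,\theta)$, $\alpha\colon[m]\to[n]$ in $\Delta$, $\theta\colon X\Rightarrow Y\circ\alpha$; composition $(\beta,\varphi)\circ(\alpha,\theta)=(\beta\alpha,(\varphi\alpha)\circ\theta)$. $\int N^{-,+}(C)$: subcategory of objects with $X$ sending all morphisms into $C_-$ and morphisms with all $\theta_i\in C_+$. $\int N^{--,+}_+(C)$: its subcategory of objects whose $X$ reflects identities and morphisms with $\alpha$ injective. Order on hom-sets: $(\alpha,\theta)\le(\alpha',\theta')$ iff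 $\alpha\le\alpha'$ pointwise and $\theta'_i=Y(\alpha(i)\le\alpha'(i))\circ\theta_i$ for all $i$. Two parallel morphisms are equivalent if related by the equivalence relation (symmetric transitive closure) generated by $\le$ on the hom-set. *)

(* Defs.v *)
From Stdlib Require Import Relation_Operators.
From mathcomp Require Import all_boot.

Set Implicit Arguments.
Unset Strict Implicit.
Unset Printing Implicit Defensive.

Record Category := {
  obj :> Type;
  hom : obj -> obj -> Type;
  idm : forall a, hom a a;
  comp : forall a b c, hom b c -> hom a b -> hom a c;  (* comp g f = g o f *)
  comp_idl : forall a b (f : hom a b), comp (idm b) f = f;
  comp_idr : forall a b (f : hom a b), comp f (idm a) = f;
  comp_assoc : forall a b c d (f : hom a b) (g : hom b c) (h : hom c d),
      comp h (comp g f) = comp (comp h g) f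
}.
Arguments hom {C} a b : rename.
Arguments idm {C} a : rename.
Arguments comp {C a b c} g f : rename.

Definition is_idm (C : Category) (a b : C) (f : hom a b) : Prop :=
  exists e : a = b, eq_rect a (fun c => hom a c) (idm a) b e = f.

Definition is_fact (C : Category) (minus plus : forall a b : C, hom a b -> bool)
    (a b : C) (f : hom a b) (s : {c : C & (hom a c * hom c b)%type}) : Prop :=
  minus _ _ (projT2 s).1 /\ plus _ _ (projT2 s).2 /\ comp (projT2 s).2 (projT2 s).1 = f.

Definition reedy_lt (C : Category) (minus plus : forall a b : C, hom a b -> bool)
    (x y : C) : Prop :=
  (exists f : hom x y, plus _ _ f /\ ~ is_idm f) \/
  (exists g : hom y x, minus _ _ g /\ ~ is_idm g).

Record Reedy := {
  rcat :> Category;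
  minus : forall a b : rcat, hom a b -> bool;
  plus : forall a b : rcat, hom a b -> bool;
  minus_id : forall a, minus (idm a);
  plus_id : forall a, plus (idm a);
  minus_comp : forall a b c (f : hom a b) (g : hom b c),
      minus f -> minus g -> minus (comp g f);
  plus_comp : forall a b c (f : hom a b) (g : hom b c),
      plus f -> plus g -> plus (comp g f);
  reedy_fact : forall a b (f : hom a b),
      exists s, is_fact minus plus f s /\ forall s', is_fact minus plus f s' -> s' = s;
  reedy_wf : well_founded (reedy_lt minus plus)
}.
Arguments minus {R a b} f : rename.
Arguments plus {R a b} f : rename.

(** * Functors [n] -> C  ([n] = 'I_n.+1 with its order) *)
Record NFun (C : Category) (n : nat) := {
  fob : 'I_n.+1 -> C;
  fmor : forall i j : 'I_n.+1, i <= j -> hom (fob i) (fob j);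
  fmor_id : forall (i : 'I_n.+1) (h : i <= i), fmor h = idm (fob i);
  fmor_comp : forall i j k : 'I_n.+1, forall (hij : i <= j) (hjk : j <= k) (hik : i <= k),
      fmor hik = comp (fmor hjk) (fmor hij)
}.
Arguments fob {C n} _ _.
Arguments fmor {C n} _ {i j} _.

Record GMor (C : Category) (m n : nat) (X : NFun C m) (Y : NFun C n) := {
  alpha : 'I_m.+1 -> 'I_n.+1;
  alpha_mono : forall i j : 'I_m.+1, i <= j -> alpha i <= alpha j;
  theta : forall i, hom (fob X i) (fob Y (alpha i));
  theta_nat : forall i j : 'I_m.+1, forall (hij : i <= j),
      comp (fmor Y (alpha_mono hij)) (theta i) = comp (theta j) (fmor X hij)
}.
Arguments alpha {C m n X Y} _ _.
Arguments theta {C m n X Y} _ _.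

Definition gle (C : Category) (m n : nat) (X : NFun C m) (Y : NFun C n)
    (f g : GMor X Y) : Prop :=
  exists hle : forall i, alpha f i <= alpha g i,
    forall i, theta g i = comp (fmor Y (hle i)) (theta f i).

Inductive GammaKind := IntN | IntNmp | IntNmmp.

Definition obj_in (R : Reedy) (k : GammaKind) (n : nat) (X : NFun R n) : Prop :=
  match k with
  | IntN => True
  | IntNmp => forall i j : 'I_n.+1, forall (h : i <= j), minus (fmor X h)
  | IntNmmp => (forall i j : 'I_n.+1, forall (h : i <= j), minus (fmor X h)) /\
               (forall i j : 'I_n.+1, forall (h : i <= j), is_idm (fmor X h) -> i = j)
  end.

Definition mor_in (R : Reedy) (k : GammaKind) (m n : nat) (X : NFun R m) (Y : NFun R n)
    (f : GMor X Y) : Prop :=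
  match k with
  | IntN => True
  | IntNmp => forall i, plus (theta f i)
  | IntNmmp => (forall i, plus (theta f i)) /\ injective (alpha f)
  end.

Definition gequiv (R : Reedy) (k : GammaKind) (m n : nat) (X : NFun R m) (Y : NFun R n)
    (f g : GMor X Y) : Prop :=
  clos_refl_sym_trans (GMor X Y)
    (fun a b => mor_in k a /\ mor_in k b /\ gle a b) f g.

Definition is_largest_above (R : Reedy) (k : GammaKind) (m n : nat)
    (X : NFun R m) (Y : NFun R n) (f psi : GMor X Y) : Prop :=
  mor_in k psi /\ gle f psi /\
  forall phi, mor_in k phi -> gle f phi -> gle phi psi.

(* Main.v *)
Require Import Defs.
From mathcomp Require Import all_boot.
From Stdlib Require Import Relation_Operators Classical ProofIrrelevance FunctionalExtensionality.

Set Implicit Arguments.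
Unset Strict Implicit.
Unset Printing Implicit Defensive.

Notation cmp := Defs.comp.
Notation cassoc := Defs.comp_assoc.
Notation cidl := Defs.comp_idl.
Notation cidr := Defs.comp_idr.

Lemma no2cycle (A : Type) (Rl : A -> A -> Prop) :
  well_founded Rl -> forall x y, Rl x y -> Rl y x -> False.
Proof.
move=> wf x; elim: (wf x) => {}x _ IH y Hxy Hyx.
exact: (IH y Hyx x Hyx Hxy).
Qed.

Lemma sig_idm (C : Category) (a b : C) (q : hom a b)
  (s : {c : C & (hom a c * hom c b)%type}) :
  s = existT (fun c => (hom a c * hom c b)%type) a (idm a, q) -> is_idm (projT2 s).1.
Proof. move=> ->; by exists erefl. Qed.

Lemma key (R : Reedy) (a b c : R) (m : hom a b) (m' : hom b c) :
  minus m -> minus m' -> is_idm (cmp m' m) -> is_idm m'.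
Proof.
move=> Hm Hm' [e He]; subst c; simpl in He.
case: (classic (is_idm m')) => // Hn; exfalso.
case: (classic (is_idm m)) => [[e2 He2]|Hnm].
- subst b; simpl in He2; subst m. apply: Hn; exists erefl; simpl.
  by rewrite He cidr.
- apply: (no2cycle (@reedy_wf R) (x:=a) (y:=b)).
  + right; by exists m'.
  + right; by exists m.
Qed.

Lemma plus_cancel (R : Reedy) (a b c : R) (g : hom b c) (m : hom a b) :
  minus m -> plus (cmp g m) -> plus g.
Proof.
move=> Hm Hgm.
have [[d [m'' p]] [[/= Hm'' [Hp Hg]] _]] := reedy_fact g.
have [s0 [_ Hu]] := reedy_fact (cmp g m).
have E1 : existT (fun d => (hom a d * hom d c)%type) d (cmp m'' m, p) = s0.
  apply: Hu; split => /=; [exact: minus_comp | split => //].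
  by rewrite cassoc Hg.
have E2 : existT (fun d => (hom a d * hom d c)%type) a (idm a, cmp g m) = s0.
  apply: Hu; split => /=; [exact: minus_id | split => //]; exact: cidr.
have /= Hid := sig_idm (etrans E1 (esym E2)).
have [e He] := key Hm Hm'' Hid. subst d. simpl in He. subst m''.
by rewrite -Hg cidr.
Qed.

Lemma plus_refl (R : Reedy) (a b c d : R) (p : hom b d) (m : hom a b)
  (q : hom a c) (u : hom c d) :
  minus m -> plus p -> plus q -> is_idm u -> cmp p m = cmp u q -> is_idm m.
Proof.
move=> Hm Hp Hq [e He] E; subst d; simpl in He; subst u; rewrite cidl in E.
have [s0 [_ Hu]] := reedy_fact q.
have E1 : existT (fun d => (hom a d * hom d c)%type) b (m, p) = s0.
  by apply: Hu; split => //=.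
have E2 : existT (fun d => (hom a d * hom d c)%type) a (idm a, q) = s0.
  apply: Hu; split => /=; [exact: minus_id | split => //]; exact: cidr.
exact: (sig_idm (etrans E1 (esym E2))).
Qed.

Lemma fmorC (C : Category) n (Y : NFun C n) (i j k : 'I_n.+1)
  (h1 : i <= j) (h2 : j <= k) (h3 : i <= k) :
  cmp (fmor Y h2) (fmor Y h1) = fmor Y h3.
Proof. symmetry; apply: fmor_comp. Qed.

Lemma fmor_idm (C : Category) n (Y : NFun C n) (a b : 'I_n.+1) (h : a <= b) :
  a = b -> is_idm (fmor Y h).
Proof. move=> e; subst b; exists erefl; by rewrite fmor_id. Qed.

Lemma gle_antisym (C : Category) m n (X : NFun C m) (Y : NFun C n) (f g : GMor X Y) :
  gle f g -> gle g f -> f = g.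
Proof.
case: f => af afm tf tfn; case: g => ag agm tg tgn /= [h1 H1] [h2 H2] /=.
simpl in h1, h2, H1, H2.
have E : af = ag.
  apply: functional_extensionality => i; apply: val_inj => /=.
  apply/eqP; by rewrite eqn_leq h1 h2.
subst ag.
have Et : tf = tg.
  apply: functional_extensionality_dep => i. by rewrite H1 fmor_id cidl.
subst tg.
move: tgn; rewrite (proof_irrelevance _ agm afm) => tgn.
by rewrite (proof_irrelevance _ tgn tfn).
Qed.

Lemma gle_trans (C : Category) m n (X : NFun C m) (Y : NFun C n) (f g h : GMor X Y) :
  gle f g -> gle g h -> gle f h.
Proof.
move=> [h1 H1] [h2 H2].
exists (fun i => leq_trans (h1 i) (h2 i)) => i.
by rewrite H2 H1 cassoc (fmorC Y (h1 i) (h2 i) (leq_trans (h1 i) (h2 i))).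
Qed.

Definition okb (R : Reedy) (k : GammaKind) (a b : R) (g : hom a b) : bool :=
  match k with IntN => true | _ => plus g end.

Definition extb (R : Reedy) (k : GammaKind) n (Y : NFun R n) (x : R) (a : 'I_n.+1)
  (t : hom x (fob Y a)) (kk : 'I_n.+1) : bool :=
  match Bool.bool_dec (a <= kk) true with left h => okb k (cmp (fmor Y h) t) | right _ => false end.
Arguments extb {R} k {n} Y {x a} t kk.

Lemma extbP (R : Reedy) (k : GammaKind) n (Y : NFun R n) (x : R) (a : 'I_n.+1)
  (t : hom x (fob Y a)) (kk : 'I_n.+1) :
  extb k Y t kk -> exists h : a <= kk, okb k (cmp (fmor Y h) t).
Proof. rewrite /extb; case: (Bool.bool_dec _ _) => // h H; by exists h. Qed.

Lemma extbI (R : Reedy) (k : GammaKind) n (Y : NFun R n) (x : R) (a : 'I_n.+1)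
  (t : hom x (fob Y a)) (kk : 'I_n.+1) (h : a <= kk) :
  okb k (cmp (fmor Y h) t) -> extb k Y t kk.
Proof.
rewrite /extb; case: (Bool.bool_dec _ _) => [h'|]; first by rewrite (bool_irrelevance h' h).
by rewrite h.
Qed.

Lemma okb_cancel (R : Reedy) k (a b c : R) (g : hom b c) (m : hom a b) :
  (k <> IntN -> minus m) -> okb k (cmp g m) -> okb k g.
Proof.
case: k => //= H; apply: plus_cancel; exact: H.
Qed.

Lemma obj_minus (R : Reedy) k n (X : NFun R n) (i j : 'I_n.+1) (h : i <= j) :
  obj_in k X -> k <> IntN -> minus (fmor X h).
Proof. case: k => /= [_ H|H _|[H _] _]; [by case: H | exact: H | exact: H]. Qed.

Lemma mor_okb (R : Reedy) k m n (X : NFun R m) (Y : NFun R n) (f : GMor X Y) i :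
  mor_in k f -> okb k (theta f i).
Proof. case: k => /= [//|H|[H _]]; exact: H. Qed.

Lemma largest_exists (R : Reedy) (k : GammaKind) m n (X : NFun R m) (Y : NFun R n)
  (f : GMor X Y) :
  obj_in k X -> obj_in k Y -> mor_in k f -> exists psi, is_largest_above k f psi.
Proof.
move=> hX hY hf.
have ok0 : forall i, extb k Y (theta f i) (alpha f i).
  move=> i; apply: (extbI (h := leqnn _)); rewrite fmor_id cidl.
  exact: mor_okb.
pose beta i := [arg max_(kk > alpha f i | extb k Y (theta f i) kk) (kk : nat)].
have bspec i : extb k Y (theta f i) (beta i) /\
               forall kk, extb k Y (theta f i) kk -> kk <= beta i.
  rewrite /beta; case: (arg_maxnP (fun kk : 'I_n.+1 => (kk : nat)) (ok0 i)) => j Hj Hmax.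
  by split.
have bge i : alpha f i <= beta i.
  by have [/extbP [h _] _] := bspec i.
have bok i : okb k (cmp (fmor Y (bge i)) (theta f i)).
  have [/extbP [h H] _] := bspec i; by rewrite (bool_irrelevance (bge i) h).
have bmono : forall i j : 'I_m.+1, i <= j -> beta i <= beta j.
  move=> i j hij. case: (leqP (beta i) (alpha f j)) => hb.
  - exact: leq_trans hb (bge j).
  - apply: (proj2 (bspec j)). apply: (extbI (h := ltnW hb)).
    apply: (okb_cancel (m := fmor X hij) (obj_minus hij hX)).
    have -> : cmp (cmp (fmor Y (ltnW hb)) (theta f j)) (fmor X hij)
              = cmp (fmor Y (bge i)) (theta f i).
      by rewrite -cassoc -theta_nat cassoc
                 (fmorC Y (alpha_mono f hij) (ltnW hb) (bge i)).
    exact: bok.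
pose th i := cmp (fmor Y (bge i)) (theta f i).
have Hnat : forall (i j : 'I_m.+1) (hij : i <= j),
    cmp (fmor Y (bmono i j hij)) (th i) = cmp (th j) (fmor X hij).
  move=> i j hij; rewrite /th.
  rewrite cassoc (fmorC Y (bge i) (bmono i j hij) (leq_trans (bge i) (bmono i j hij))).
  rewrite -cassoc -theta_nat cassoc
          (fmorC Y (alpha_mono f hij) (bge j) (leq_trans (bge i) (bmono i j hij))).
  done.
exists (@Build_GMor _ _ _ X Y beta bmono th Hnat).
split; last split.
- have inj : k = IntNmmp -> injective beta.
    move=> Ek; subst k.
    have H1 : forall i j : 'I_m.+1, i <= j -> beta i = beta j -> i = j.
      move=> i j hij E. apply: (proj2 hX i j hij).
      apply: (plus_refl (p := th j) (q := th i) (u := fmor Y (bmono i j hij))).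
      + by apply: (obj_minus _ hX).
      + exact: bok.
      + exact: bok.
      + exact: fmor_idm.
      + by rewrite Hnat.
    move=> i j E; case/orP: (leq_total i j) => hij.
    + exact: H1.
    + symmetry; exact: H1.
  move: inj bok; rewrite /th; case: (k) => /= inj bok //; try split => //; try (move=> i; exact: bok); exact: inj.
- by exists bge => i.
- move=> phi hphi [h H] /=.
  have hle : forall i, alpha phi i <= beta i.
    move=> i; apply: (proj2 (bspec i)); apply: (extbI (h := h i)).
    rewrite -H; exact: mor_okb.
  exists hle => i /=; rewrite /th H cassoc.
  by rewrite (fmorC Y (h i) (hle i) (bge i)).
Qed.

Lemma largest_unique (R : Reedy) (k : GammaKind) m n (X : NFun R m) (Y : NFun R n)
  (f p1 p2 : GMor X Y) :
  is_largest_above k f p1 -> is_largest_above k f p2 -> p1 = p2.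
Proof.
move=> [m1 [l1 M1]] [m2 [l2 M2]]; apply: gle_antisym.
- exact: M2.
- exact: M1.
Qed.

Lemma largest_le (R : Reedy) (k : GammaKind) m n (X : NFun R m) (Y : NFun R n)
  (f g pf pg : GMor X Y) :
  mor_in k g -> gle f g -> is_largest_above k f pf -> is_largest_above k g pg -> pf = pg.
Proof.
move=> mg fg [mf [lf Mf]] [mpg [lg Mg]]; apply: gle_antisym.
- apply: Mg => //; exact: Mf.
- apply: Mf => //; exact: gle_trans lg.
Qed.

Lemma Qlemma (R : Reedy) (k : GammaKind) m n (X : NFun R m) (Y : NFun R n)
  (a b : GMor X Y) :
  obj_in k X -> obj_in k Y -> gequiv k a b ->
  (mor_in k a \/ mor_in k b) ->
  mor_in k a /\ mor_in k b /\
  forall pa pb, is_largest_above k a pa -> is_largest_above k b pb -> pa = pb.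
Proof.
move=> hX hY; elim => {a b}.
- move=> a b [ma [mb le]] _; do 2 split => //.
  move=> pa pb; exact: largest_le.
- move=> a H; have ma : mor_in k a by case: H.
  do 2 split => //; move=> pa pb; exact: largest_unique.
- move=> a b _ IH H.
  have H' : mor_in k a \/ mor_in k b by tauto.
  have [ma [mb E]] := IH H'.
  do 2 split => //; move=> pa pb Ha Hb; symmetry; exact: E.
- move=> a b c _ IH1 _ IH2 H.
  case: H => [ma | mc].
  + have [_ [mb E1]] := IH1 (or_introl ma).
    have [_ [mc E2]] := IH2 (or_introl mb).
    do 2 split => //; move=> pa pc Ha Hc.
    have [pb Hb] := largest_exists hX hY mb.
    by rewrite (E1 _ _ Ha Hb) (E2 _ _ Hb Hc).
  + have [mb [_ E2]] := IH2 (or_intror mc).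
    have [ma [_ E1]] := IH1 (or_intror mb).
    do 2 split => //; move=> pa pc Ha Hc.
    have [pb Hb] := largest_exists hX hY mb.
    by rewrite (E1 _ _ Ha Hb) (E2 _ _ Hb Hc).
Qed.

Lemma common_equiv (R : Reedy) (k : GammaKind) m n (X : NFun R m) (Y : NFun R n)
  (f f' psi : GMor X Y) :
  mor_in k f -> mor_in k f' -> mor_in k psi -> gle f psi -> gle f' psi -> gequiv k f f'.
Proof.
move=> hf hf' mp l1 l2.
apply: (rst_trans _ _ _ psi).
- by apply: rst_step.
- by apply: rst_sym; apply: rst_step.
Qed.

Theorem proposition4p6 (R : Reedy) (k : GammaKind) (m n : nat)
    (X : NFun R m) (Y : NFun R n) (f f' : GMor X Y) :
  obj_in k X -> obj_in k Y -> mor_in k f -> mor_in k f' ->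
  (exists psi, is_largest_above k f psi) /\
  (exists psi', is_largest_above k f' psi') /\
  (gequiv k f f' <-> exists psi, mor_in k psi /\ gle f psi /\ gle f' psi) /\
  (gequiv k f f' <->
     forall psi psi', is_largest_above k f psi -> is_largest_above k f' psi' -> psi = psi').
Proof.
move=> hX hY hf hf'.
have [pf Hf] := largest_exists hX hY hf.
have [pf' Hf'] := largest_exists hX hY hf'.
split; first by exists pf.
split; first by exists pf'.
split; split.
- move=> H; have [_ [_ E]] := Qlemma hX hY H (or_introl hf).
  have Ep := E _ _ Hf Hf'.
  exists pf; case: Hf => [mp [l1 _]]; split => //; split => //.
  rewrite Ep; by case: Hf' => [_ [l2 _]].
- move=> [psi [mp [l1 l2]]]; exact: (common_equiv hf hf' mp l1 l2).
- move=> H; have [_ [_ E]] := Qlemma hX hY H (or_introl hf); exact: E.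
- move=> H; have Ep := H _ _ Hf Hf'.
  case: Hf => [mp [l1 _]]; case: Hf' => [_ [l2 _]].
  subst pf'; exact: (common_equiv hf hf' mp l1 l2).
Qed.
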